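(* Let $M$ be a $3$-connected simple matroid with $r(M)\ge 4$, and let $x_1,\dots,x_n,y_1,\dots,y_n$ ($n\ge 3$) be a carambole of $M$ with filament $L=\{y_1,\dots,y_n\}$ and hull $X=\{x_1,\dots,x_n\}$. Then $r^*_M(X)=2$, and $|X|=|L|$ (i.e. $x_1,\dots,x_n$ are distinct).
   Context: A line of $M$ is a rank-$2$ set. For $n\ge3$, a sequence $x_1,\dots,x_n,y_1,\dots,y_n$ of elements of $M$ is a carambole of $M$ if $L:=\{y_1,\dots,y_n\}$ is a line of $M$ with $n$ distinct elements such that $\mathrm{si}(M/L)$ is $3$-connected, and, for each $i$, $(L-y_i)\cup x_i$ is a cocircuit of $M$. $L$ is the filament and $X:=\{x_1,\dots,x_n\}$ the hull of the carambole. $r^*_M$ denotes the corank (rank function of the dual $M^*$). *)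

(* Defs.v *)
(* Matroids on a finite type T, given by a ground set E and a
   rank function r (only its values on subsets of E matter). *)
From mathcomp Require Import all_boot.
Set Implicit Arguments. Unset Strict Implicit. Unset Printing Implicit Defensive.

Section Matroids.
Variable T : finType.
Implicit Types (E A B C D L S : {set T}) (r : {set T} -> nat).

Definition is_matroid E r : Prop :=
  [/\ forall A, A \subset E -> r A <= #|A|,
      forall A B, A \subset B -> B \subset E -> r A <= r B &
      forall A B, A \subset E -> B \subset E ->
        r (A :|: B) + r (A :&: B) <= r A + r B].

Definition dual_rank E r : {set T} -> nat :=
  fun A => #|A| + r (E :\: A) - r E.

Definition circuit E r C : Prop :=
  [/\ C \subset E, r C < #|C| & forall D, D \proper C -> r D = #|D|].

Definition cocircuit E r C : Prop := circuit E (dual_rank E r) C.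

Definition simple E r : Prop :=
  forall A, A \subset E -> #|A| <= 2 -> r A = #|A|.

Definition conn E r A : nat := r A + r (E :\: A) - r E.

Definition separation E r k A : Prop :=
  [/\ A \subset E, k <= #|A|, k <= #|E :\: A| & conn E r A < k].

Definition n_connected E r n : Prop :=
  forall k A, 1 <= k < n -> ~ separation E r k A.

Definition three_connected E r : Prop := n_connected E r 3.

Definition contr_ground E L : {set T} := E :\: L.
Definition contr_rank r L : {set T} -> nat := fun A => r (A :|: L) - r L.

Definition parallel r x y : bool :=
  [&& x != y, r [set x] == 1, r [set y] == 1 & r [set x; y] == 1].

(* Simplification si(M): the restriction of M to the set obtained by deleting
   all loops and keeping, in each parallel class, only the element of least
   enum_rank.  (Any simplification is isomorphic to this one.) *)
Definition si_ground E r : {set T} :=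
  [set x in E | (0 < r [set x]) &&
     [forall y in E, (enum_rank y < enum_rank x)%N ==> ~~ parallel r y x]].

Definition carambole E r n (x y : 'I_n -> T) : Prop :=
  let L := [set y i | i : 'I_n] in
  [/\ 3 <= n,
      (forall i, x i \in E) /\ (forall i, y i \in E),
      r L = 2 /\ injective y,
      three_connected (si_ground (contr_ground E L) (contr_rank r L))
                      (contr_rank r L) &
      forall i, cocircuit E r ((L :\ y i) :|: [set x i])].

End Matroids.

(* Main.v *)
Require Import Defs.
From mathcomp Require Import all_boot.
From mathcomp Require Import zify.

Set Implicit Arguments. Unset Strict Implicit. Unset Printing Implicit Defensive.

Section Aux.
Variable T : finType.
Variables (E : {set T}) (r : {set T} -> nat).
Implicit Types (A B C S : {set T}).
Hypothesis hM : is_matroid E r.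

Lemma rk_card A : A \subset E -> r A <= #|A|.
Proof. by case: hM => h1 _ _; apply: h1. Qed.

Lemma rk_mono A B : A \subset B -> B \subset E -> r A <= r B.
Proof. by case: hM => _ h2 _; apply: h2. Qed.

Lemma rk_sub A B : A \subset E -> B \subset E ->
  r (A :|: B) + r (A :&: B) <= r A + r B.
Proof. by case: hM => _ _ h3; apply: h3. Qed.

Lemma rk_union A B : A \subset E -> B \subset E -> r (A :|: B) <= r A + r B.
Proof. move=> hA hB; have := rk_sub hA hB; lia. Qed.

Lemma rk_U1 e S : e \in E -> S \subset E -> r (e |: S) <= r S + 1.
Proof.
move=> he hS.
have h1 : [set e] \subset E by rewrite sub1set.
have := rk_union h1 hS; have := rk_card h1; rewrite cards1; lia.
Qed.

Lemma rk_UA S A : S \subset E -> A \subset E -> r (S :|: A) <= r S + #|A|.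
Proof.
move=> hS; move Hk: #|A| => k; elim: k A Hk => [|k IH] A Hk hA.
  have -> : A = set0 by apply/eqP; rewrite -cards_eq0 Hk.
  by rewrite setU0 addn0.
have [a aA]: exists a, a \in A by apply/set0Pn; rewrite -card_gt0 Hk.
have hA' : A :\ a \subset E by apply: subset_trans hA; apply: subsetDl.
rewrite (cardsD1 a A) aA in Hk.
have hk : #|A :\ a| = k by lia.
rewrite -{1}(setD1K aA) setUCA.
have := IH (A :\ a) hk hA'.
have haE : a \in E by apply: (subsetP hA).
have hSU : S :|: A :\ a \subset E by rewrite subUset hS hA'.
have := rk_U1 haE hSU; lia.
Qed.

Lemma cocirc_facts C : cocircuit E r C -> 2 <= #|C| ->
  [/\ C \subset E, r (E :\: C) < r E &
      forall e, e \in C -> r (E :\: (C :\ e)) = r E].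
Proof.
case=> hCE hlt hmin h2; split => //.
  move: hlt; rewrite /dual_rank; lia.
move=> e eC.
have := hmin _ (properD1 eC); rewrite /dual_rank => h.
have := rk_mono (subsetDl E (C :\ e)) (subxx E).
have := cardsD1 e C; rewrite eC; lia.
Qed.

Lemma conn_ge2 A : three_connected E r -> A \subset E -> 2 <= #|A| ->
  2 <= #|E :\: A| -> 2 <= r A + r (E :\: A) - r E.
Proof.
move=> h3 hA h1 h2; rewrite leqNgt; apply/negP => hc.
by apply: (h3 2 A) => //; split.
Qed.

End Aux.
Theorem proposition4p1 (T : finType) (E : {set T}) (r : {set T} -> nat)
  (n : nat) (x y : 'I_n -> T) :
  is_matroid E r -> three_connected E r -> simple E r -> 4 <= r E ->
  carambole E r x y ->
  dual_rank E r [set x i | i : 'I_n] = 2 /\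
  #|[set x i | i : 'I_n]| = #|[set y i | i : 'I_n]|.
Proof.
move=> hM h3c _ hR.
rewrite /carambole => -[hn [hxE hyE] [hL2 yinj] _ hcoc].
set L := [set y i | i : 'I_n] in hL2 hcoc *.
set X := [set x i | i : 'I_n].
set R := r E.
have hLE : L \subset E by apply/subsetP => e /imsetP [i _ ->].
have hLc : #|L| = n by rewrite card_imset // card_ord.
have yL i : y i \in L by apply: imset_f.
have xX i : x i \in X by apply: imset_f.
pose C i := L :\ y i :|: [set x i].
have inC e i : (e \in C i) = ((e != y i) && (e \in L)) || (e == x i).
  by rewrite !inE.
have hC i : [/\ C i \subset E, r (E :\: C i) < R &
      forall e, e \in C i -> r (E :\: (C i :\ e)) = R].
  apply: cocirc_facts; [exact: hM | exact: hcoc i |].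
  have := cardsD1 (y i) L; rewrite yL hLc => h.
  have := subset_leq_card (subsetUl (L :\ y i) [set x i]); rewrite -/(C i); lia.
have hELE : E :\: L \subset E by apply: subsetDl.
have hEL : r (E :\: L) = R.
  have h1 : R <= r L + r (E :\: L).
    apply: leq_trans (rk_union hM hLE hELE).
    apply: (rk_mono hM); last by rewrite subUset hLE hELE.
    by apply/subsetP => e eE; rewrite !inE eE; case: (e \in L).
  have h2 := rk_card hM hELE.
  have := conn_ge2 h3c hLE; rewrite hLc => h3.
  have := h3 (leq_trans (isT : 2 <= 3) hn); rewrite hL2.
  have h4 := rk_mono hM hELE (subxx E).
  rewrite -/R in h1 h2 h4 *; lia.
have xnL i : x i \notin L.
  apply/negP => xiL; case: (hC i) => _ hlt _.
  have : E :\: L \subset E :\: C i.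
    apply: setDS; apply/subsetP => e; rewrite inC.
    by case/orP => [/andP[_ ->] | /eqP ->].
  move/(rk_mono hM)/(_ (subsetDl _ _)); rewrite hEL; lia.
have xinj : injective x.
  move=> i j hij; case: (eqVneq i j) => // nij; exfalso.
  case: (hC i) => hCiE hlti hmi; case: (hC j) => hCjE hltj _.
  set A := E :\: C i in hlti *; set B := E :\: C j in hltj *.
  have hAE : A \subset E by apply: subsetDl.
  have hBE : B \subset E by apply: subsetDl.
  have nyji : y j != y i by rewrite (inj_eq yinj) eq_sym.
  have yjCi : y j \in C i by rewrite inC nyji yL.
  have yjCj : y j \notin C j.
    rewrite inC eqxx /=; apply/negP => /eqP h.
    by move: (xnL j); rewrite -h yL.
  have h1 : R <= r (A :|: B).
    rewrite -(hmi _ yjCi); apply: (rk_mono hM); last by rewrite subUset hAE hBE.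
    apply/subsetP => e; rewrite in_setD in_setD1 in_setU !in_setD.
    case: (eqVneq e (y j)) => [->|ne] /=.
      by rewrite (negbTE yjCj) hyE orbT.
    by move=> /andP[-> ->].
  have h2 := rk_sub hM hAE hBE.
  have hABE : A :&: B \subset E by apply: subset_trans (subsetIl _ _) hAE.
  have hE : E :\: L \subset x i |: (A :&: B).
    apply/subsetP => e; rewrite in_setD => /andP[eL eE].
    rewrite in_setU1 in_setI !in_setD !inC eE (negbTE eL) !andbF /= -hij.
    by case: (e == x i).
  have h3 := rk_U1 hM (hxE i) hABE.
  have h4 := rk_mono hM hE (_ : x i |: (A :&: B) \subset E).
  rewrite subUset sub1set hxE hABE /= in h4.
  have := h4 isT; rewrite hEL; lia.
pose Xm m := x @: [set i : 'I_n | i < m].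
have F4 : forall m, m <= n -> r (E :\: (L :|: Xm m)) + m <= R.
  elim=> [_|m IH hm].
    by rewrite addn0; apply: (rk_mono hM (subsetDl _ _) (subxx _)).
  pose k := Ordinal hm.
  set U := E :\: (L :|: Xm m.+1). set V := E :\: (L :|: Xm m).
  case: (hC k) => hCkE hltk hmk.
  have xkC : x k \in C k by rewrite inC eqxx orbT.
  have hUH : U \subset E :\: C k.
    apply/subsetP => e; rewrite !in_setD in_setU inC => /andP[/norP[eL eX] eE].
    rewrite eE andbT (negbTE eL) andbF /=.
    apply: contra eX => /eqP ->; apply: imset_f; rewrite inE /=; exact: ltnSn.
  have hUE : U \subset E by apply: subsetDl.
  have hU'E : x k |: U \subset E by rewrite subUset sub1set hxE.
  have h1 := rk_sub hM (subsetDl E (C k)) hU'E.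
  have h2 : R <= r ((E :\: C k) :|: (x k |: U)).
    rewrite -(hmk _ xkC); apply: (rk_mono hM); last by rewrite subUset subsetDl hU'E.
    apply/subsetP => e; rewrite in_setD in_setD1 in_setU in_setD in_setU1.
    case: (eqVneq e (x k)) => [->|ne] /=; first by rewrite orbT.
    by move=> ->.
  have h3 : r U <= r ((E :\: C k) :&: (x k |: U)).
    apply: (rk_mono hM); last by apply: subset_trans (subsetIl _ _) (subsetDl _ _).
    by rewrite subsetI hUH subsetUr.
  have h4 : r (x k |: U) <= r V.
    apply: (rk_mono hM); last by apply: subsetDl.
    rewrite subUset sub1set; apply/andP; split.
      rewrite in_setD in_setU (negbTE (xnL k)) hxE andbT /=.
      apply/imsetP => -[j]; rewrite inE => jm /xinj hkj.
      by move: jm; rewrite -hkj /= ltnn.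
    apply: setDS; apply: setUS; apply: imsetS; apply/subsetP => i; rewrite !inE.
    exact: ltnW.
  have := IH (ltnW hm); rewrite -/V.
  lia.
have XmX : Xm n = X.
  apply/setP=> e; apply/imsetP/imsetP => -[i hi ->]; exists i => //.
  by rewrite inE ltn_ord.
have hG := F4 n (leqnn n); rewrite XmX in hG.
have hXE : X \subset E by apply/subsetP => e /imsetP [i _ ->].
have hGE : E :\: (L :|: X) \subset E by apply: subsetDl.
have hup : r (E :\: X) <= r (E :\: (L :|: X)) + 2.
  rewrite -hL2; apply: leq_trans (rk_union hM hGE hLE).
  apply: (rk_mono hM); last by rewrite subUset hGE hLE.
  apply/subsetP => e; rewrite !in_setD !in_setU !in_setD.
  rewrite in_setU.
  by case: (e \in L); case: (e \in X); case: (e \in E).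
have hXc : #|X| = n by rewrite card_imset // card_ord.
have n0 : 0 < n by apply: leq_trans hn.
have n1 : 1 < n by apply: leq_trans hn.
pose i0 := Ordinal n0. pose i1 := Ordinal n1.
pose P := [set x i0; x i1].
have hne : x i0 != x i1 by rewrite (inj_eq xinj).
have hPX : P \subset X by rewrite subUset !sub1set !xX.
have hPE : P \subset E by apply: subset_trans hPX hXE.
have hPc : #|P| = 2 by rewrite cards2 hne.
have hEc : R <= #|E| := rk_card hM (subxx E).
have hEPc : #|E :\: P| = #|E| - 2 by rewrite cardsDS // hPc.
have hconn := conn_ge2 h3c hPE.
rewrite hPc hEPc in hconn.
have hPr := rk_card hM hPE.
have hXPE : X :\: P \subset E by apply: subset_trans (subsetDl _ _) hXE.
have hlow := rk_UA hM (subsetDl E X) hXPE.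
have hsub : E :\: P \subset (E :\: X) :|: (X :\: P).
  have gen : forall P' X' : {set T}, E :\: P' \subset (E :\: X') :|: (X' :\: P'); last exact: gen.
  move=> P' X'.
  apply/subsetP => e; rewrite !in_setD !in_setU !in_setD.
  by case: (e \in P'); case: (e \in X'); case: (e \in E).
have hlow2 := rk_mono hM hsub (_ : E :\: X :|: X :\: P \subset E).
rewrite subUset subsetDl hXPE /= in hlow2; have {}hlow2 := hlow2 isT.
rewrite cardsDS // hXc hPc in hlow.
rewrite -/R hPc in hconn hPr.
split; last by rewrite hXc hLc.
rewrite /dual_rank hXc -/R.
have := hconn (isT : 1 < 2).
lia.
Qed.
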